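(* Let $k\ge3$ and let $\mathcal X\subset\mathbb R$ be a finite set (with distance $d(x,y)=|x-y|$) having a convex-nice $k$-clustering $\mathcal C=\{C_1,\ldots,C_k\}$. Then for every integer $\ell$ with $1\le\ell\le\min_i|C_i|$ there exists an ordering of $\mathcal X$ such that the final centers of sequential $\ell$-means run on this ordering do not induce a refinement of $\mathcal C$.
   Context: A clustering of $\mathcal X$ is a set of nonempty, pairwise disjoint subsets whose union is $\mathcal X$; a $k$-clustering has exactly $k$ clusters. A clustering $\mathcal C=\{C_1,\ldots,C_k\}$ is convex-nice if for any $i\ne j$, any $x,y$ in the convex hull of $C_i$ and any $z$ in the convex hull of $C_j$, $d(y,x)<d(z,x)$. A list $T=(t_1,\ldots,t_m)$ induces the clustering of $\mathcal X$ assigning each $x$ to the index $i$ minimizing $|x-t_i|$ (ties by smallest $i$), empty clusters discarded. $\mathcal C$ is a refinement of $\mathcal C'$ if $x\sim_{\mathcal C}y$ implies $x\sim_{\mathcal C'}y$, where $x\sim_{\mathcal C}y$ means $x,y$ lie in the same cluster of $\mathcal C$. Sequential $\ell$-means on input sequence $x_1,\ldots,x_N$: set $t_i=x_i$, $n_i=1$ for $i=1,\ldots,\ell$; for each subsequent point $x$: let $i$ be the index of the closest center (ties by smallest index), increment $n_i$, and replace $t_i$ by $t_i+(1/n_i)(x-t_i)$. Output the final $(t_1,\ldots,t_\ell)$. *)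

(* Defs.v *)
(* real numbers R, finite sets represented as duplicate-free lists. *)
From Stdlib Require Import Reals List Permutation.
Import ListNotations.
Open Scope R_scope.

Definition sumR (l : list R) : R := fold_right Rplus 0 l.

Definition in_hull (C : list R) (y : R) : Prop :=
  exists ws : list R,
    length ws = length C /\ Forall (fun w => 0 <= w) ws /\ sumR ws = 1 /\
    y = sumR (map (fun p => fst p * snd p) (combine ws C)).

Definition is_clustering (X : list R) (Cs : list (list R)) : Prop :=
  Forall (fun C => C <> [] /\ NoDup C) Cs /\
  (forall i j x, (i < length Cs)%nat -> (j < length Cs)%nat -> i <> j ->
     In x (nth i Cs []) -> ~ In x (nth j Cs [])) /\
  (forall x, In x X <-> exists C, In C Cs /\ In x C).

Definition is_k_clustering (k : nat) (X : list R) (Cs : list (list R)) : Prop :=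
  is_clustering X Cs /\ length Cs = k.

Definition convex_nice (Cs : list (list R)) : Prop :=
  forall i j, (i < length Cs)%nat -> (j < length Cs)%nat -> i <> j ->
    forall x y z, in_hull (nth i Cs []) x -> in_hull (nth i Cs []) y ->
      in_hull (nth j Cs []) z -> Rabs (y - x) < Rabs (z - x).

Definition same_cluster (Cs : list (list R)) (x y : R) : Prop :=
  exists C, In C Cs /\ In x C /\ In y C.

(* ---------- nearest center (ties broken by smallest index) ---------- *)
Fixpoint argmin_aux (T : list R) (x : R) (i bi : nat) (bd : R) : nat :=
  match T with
  | [] => bi
  | t :: T' =>
      if Rlt_dec (Rabs (x - t)) bd then argmin_aux T' x (S i) i (Rabs (x - t))
      else argmin_aux T' x (S i) bi bd
  end.

Definition nearest (T : list R) (x : R) : nat :=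
  match T with
  | [] => O
  | t :: T' => argmin_aux T' x 1 0 (Rabs (x - t))
  end.

(* x ~ y in the clustering induced by T (empty clusters are irrelevant) *)
Definition same_induced (T : list R) (x y : R) : Prop := nearest T x = nearest T y.

Definition refines (X : list R) (rel rel' : R -> R -> Prop) : Prop :=
  forall x y, In x X -> In y X -> rel x y -> rel' x y.

Fixpoint replace_nth {A} (l : list A) (i : nat) (a : A) : list A :=
  match l, i with
  | [], _ => []
  | _ :: l', O => a :: l'
  | b :: l', S i' => b :: replace_nth l' i' a
  end.

(* state: list of (center t_i, count n_i) *)
Definition seq_step (st : list (R * nat)) (x : R) : list (R * nat) :=
  let i := nearest (map fst st) x in
  let '(t, n) := nth i st (0, O) in
  let n' := S n in
  replace_nth st i (t + / INR n' * (x - t), n').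

Definition seq_means (l : nat) (xs : list R) : list R :=
  map fst (fold_left seq_step (skipn l xs) (map (fun x => (x, 1%nat)) (firstn l xs))).

(* Main.v *)
Require Import Defs.
From Stdlib Require Import Reals List Permutation Lra Lia.
Import ListNotations.
Open Scope R_scope.

Ltac rabs := unfold Rabs in *; repeat match goal with
  | |- context [Rcase_abs ?a] => destruct (Rcase_abs a)
  | H : context [Rcase_abs ?a] |- _ => destruct (Rcase_abs a)
  end; lra.

Lemma dist_le a b x : a <= x -> b <= x -> Rabs (x - a) <= Rabs (x - b) -> b <= a.
Proof. intros; rabs. Qed.

Lemma skipn_cons_inv (L : list R) : forall i t T', skipn i L = t :: T' ->
  nth i L 0 = t /\ skipn (S i) L = T' /\ (i < length L)%nat.
Proof.
  induction L as [|a L IH]; intros i t T' H.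
  - destruct i; simpl in H; discriminate.
  - destruct i; simpl in H.
    + inversion H; subst; simpl; repeat split; auto; lia.
    + destruct (IH i t T' H) as [H1 [H2 H3]]. simpl. repeat split; auto; lia.
Qed.

Lemma argmin_spec L x : forall T i bi, skipn i L = T -> (bi < i)%nat -> (i <= length L)%nat ->
  (forall m, (m < i)%nat -> Rabs (x - nth bi L 0) <= Rabs (x - nth m L 0)) ->
  (forall m, (m < bi)%nat -> Rabs (x - nth bi L 0) < Rabs (x - nth m L 0)) ->
  (argmin_aux T x i bi (Rabs (x - nth bi L 0%R)) < length L)%nat /\
  (forall m, (m < length L)%nat -> Rabs (x - nth (argmin_aux T x i bi (Rabs (x - nth bi L 0))) L 0) <= Rabs (x - nth m L 0)) /\
  (forall m, (m < argmin_aux T x i bi (Rabs (x - nth bi L 0%R)))%nat -> Rabs (x - nth (argmin_aux T x i bi (Rabs (x - nth bi L 0))) L 0) < Rabs (x - nth m L 0)).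
Proof.
  induction T as [|t T IH]; intros i bi Hs Hbi Hi H1 H2.
  - simpl. assert (length L <= i)%nat.
    { pose proof (length_skipn i L) as E. rewrite Hs in E. simpl in E. lia. }
    repeat split; auto; try lia. intros m Hm. apply H1. lia.
  - destruct (skipn_cons_inv L i t T Hs) as [Ht [Hs' Hil]].
    simpl. destruct (Rlt_dec (Rabs (x - t)) (Rabs (x - nth bi L 0))) as [Hlt|Hge].
    + rewrite <- Ht. apply IH; auto; try lia.
      * intros m Hm. destruct (Nat.eq_dec m i); [rewrite e, Ht; lra|].
        assert (m < i)%nat by lia. specialize (H1 m H). rewrite Ht; lra.
      * intros m Hm. specialize (H1 m Hm). rewrite Ht; lra.
    + apply IH; auto; try lia.
      intros m Hm. destruct (Nat.eq_dec m i); [rewrite e, Ht; lra|].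
      apply H1; lia.
Qed.

Lemma nearest_spec (T : list R) x : T <> [] ->
  (nearest T x < length T)%nat /\
  (forall m, (m < length T)%nat -> Rabs (x - nth (nearest T x) T 0) <= Rabs (x - nth m T 0)) /\
  (forall m, (m < nearest T x)%nat -> Rabs (x - nth (nearest T x) T 0) < Rabs (x - nth m T 0)).
Proof.
  intros Hne. destruct T as [|t T]; [congruence|].
  unfold nearest. change (Rabs (x - t)) with (Rabs (x - nth 0 (t :: T) 0)).
  apply argmin_spec; simpl; auto; try lia.
  - intros m Hm. destruct m; [lra|lia].
Qed.

Lemma replace_nth_length {A} (l : list A) : forall i a, length (replace_nth l i a) = length l.
Proof. induction l; intros [|i] a0; simpl; auto. Qed.

Lemma replace_nth_nth {A} (l : list A) : forall i a d m, (i < length l)%nat ->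
  nth m (replace_nth l i a) d = if Nat.eq_dec m i then a else nth m l d.
Proof.
  induction l as [|b l IH]; intros i a d m Hi; simpl in Hi; [lia|].
  destruct i; destruct m; simpl;
  repeat match goal with |- context [Nat.eq_dec ?a ?b] => destruct (Nat.eq_dec a b) end;
  auto; try lia.
  - rewrite IH by lia. destruct (Nat.eq_dec m i); auto; lia.
  - rewrite IH by lia. destruct (Nat.eq_dec m i); auto; lia.
Qed.

Lemma nth_map_fst (l : list (R * nat)) : forall i, nth i (map fst l) 0 = fst (nth i l (0, O)).
Proof. induction l; intros [|i]; simpl; auto. Qed.

Lemma step_spec st x : st <> [] -> length (seq_step st x) = length st /\
  exists c, 0 < c <= 1 /\ forall i, (i < length st)%nat ->
    nth i (map fst (seq_step st x)) 0 =
    if Nat.eq_dec i (nearest (map fst st) x)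
    then nth (nearest (map fst st) x) (map fst st) 0 + c * (x - nth (nearest (map fst st) x) (map fst st) 0)
    else nth i (map fst st) 0.
Proof.
  intros Hne.
  assert (Hm : map fst st <> []) by (destruct st; simpl; congruence).
  destruct (nearest_spec _ x Hm) as [Hn _]. rewrite length_map in Hn.
  unfold seq_step.
  destruct (nth (nearest (map fst st) x) st (0, O)) as [t k] eqn:E.
  split; [apply replace_nth_length|].
  exists (/ INR (S k)). split.
  - split. apply Rinv_0_lt_compat, lt_0_INR; lia.
    rewrite <- Rinv_1. apply Rinv_le_contravar; [lra|]. apply (le_INR 1); lia.
  - intros i Hi. rewrite !nth_map_fst, replace_nth_nth by auto. rewrite E.
    destruct (Nat.eq_dec i (nearest (map fst st) x)); simpl; reflexivity.
Qed.

Definition allle a1 (st : list (R * nat)) :=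
  forall i, (i < length st)%nat -> nth i (map fst st) 0 <= a1.

Lemma phase1 a1 : forall P st, (0 < length st)%nat -> (forall x, In x P -> x <= a1) -> allle a1 st ->
  length (fold_left seq_step P st) = length st /\ allle a1 (fold_left seq_step P st).
Proof.
  induction P as [|x P IH]; intros st Hl HP Ha; simpl; auto.
  assert (Hne : st <> []) by (destruct st; simpl in Hl; [lia|congruence]).
  destruct (step_spec st x Hne) as [Hlen [c [Hc Hf]]].
  assert (Hall : allle a1 (seq_step st x)).
  { intros i Hi. rewrite Hlen in Hi. unfold allle. rewrite Hf by auto.
    assert (Hm : map fst st <> []) by (destruct st; simpl; congruence).
    destruct (nearest_spec _ x Hm) as [Hn _]. rewrite length_map in Hn.
    destruct (Nat.eq_dec i (nearest (map fst st) x)); [|apply Ha; auto].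
    assert (H1 := Ha _ Hn). assert (H2 : x <= a1) by (apply HP; simpl; auto).
    set (tn := nth (nearest (map fst st) x) (map fst st) 0) in *. nra. }
  destruct (IH (seq_step st x)) as [E1 E2]; auto.
  - rewrite Hlen; auto.
  - intros; apply HP; simpl; auto.
  - rewrite E1, Hlen. auto.
Qed.

Definition inv2 a1 b (st : list (R * nat)) :=
  (forall i, (i < length st)%nat -> nth i (map fst st) 0 <= b) /\
  (allle a1 st \/ exists j, (j < length st)%nat /\ forall i, (i < length st)%nat -> i <> j ->
     nth i (map fst st) 0 <= a1 /\ nth i (map fst st) 0 <= nth j (map fst st) 0).

Lemma step2 a1 b st x : (0 < length st)%nat -> inv2 a1 b st -> b <= x -> inv2 a1 x (seq_step st x).
Proof.
  intros Hl [Hb Hc] Hx.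
  assert (Hne : st <> []) by (destruct st; simpl in Hl; [lia|congruence]).
  destruct (step_spec st x Hne) as [Hlen [c [Hc01 Hf]]].
  assert (Hm : map fst st <> []) by (destruct st; simpl; congruence).
  destruct (nearest_spec _ x Hm) as [Hn [Hmin _]]. rewrite length_map in Hn, Hmin.
  set (n := nearest (map fst st) x) in *.
  set (T := map fst st) in *.
  assert (Hmax : forall m, (m < length st)%nat -> nth m T 0 <= nth n T 0).
  { intros m Hm'. apply (dist_le _ _ x); [specialize (Hb n Hn); lra| specialize (Hb m Hm'); lra| auto]. }
  assert (Hv1 : nth n T 0 <= nth n T 0 + c * (x - nth n T 0)) by (specialize (Hb n Hn); nra).
  assert (Hv2 : nth n T 0 + c * (x - nth n T 0) <= x) by (specialize (Hb n Hn); nra).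
  unfold inv2, allle; rewrite Hlen. split.
  - intros i Hi. rewrite Hf by auto. destruct (Nat.eq_dec i n); auto.
    specialize (Hb i Hi); lra.
  - right. exists n. split; auto. intros i Hi Hin.
    rewrite !Hf by auto. destruct (Nat.eq_dec i n); [contradiction|].
    destruct (Nat.eq_dec n n); [|contradiction].
    split; [|specialize (Hmax i Hi); lra].
    destruct Hc as [Ha | [j [Hj Hjj]]]; [apply Ha; auto|].
    destruct (Nat.eq_dec i j).
    + subst j. assert (n <> i) by auto. destruct (Hjj n Hn H) as [H1 _].
      specialize (Hmax i Hi). lra.
    + apply Hjj; auto.
Qed.

Fixpoint sortedR (l : list R) : Prop :=
  match l with
  | [] => True
  | x :: l' => (forall y, In y l' -> x <= y) /\ sortedR l'
  end.

Lemma phase2 a1 : forall S st b, sortedR S -> (forall x, In x S -> b <= x) -> (0 < length st)%nat ->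
  inv2 a1 b st -> length (fold_left seq_step S st) = length st /\ exists b', inv2 a1 b' (fold_left seq_step S st).
Proof.
  induction S as [|x S IH]; intros st b HS Hb Hl Hi; simpl; [split; eauto|].
  assert (Hne : st <> []) by (destruct st; simpl in Hl; [lia|congruence]).
  destruct (step_spec st x Hne) as [Hlen _].
  destruct HS as [HS1 HS2].
  destruct (IH (seq_step st x) x HS2 HS1) as [E1 E2]; try rewrite Hlen; auto.
  apply (step2 a1 b); auto. apply Hb; simpl; auto.
  rewrite E1; auto.
Qed.

Lemma two_nonj (T : list R) j a1 u w : T <> [] ->
  (forall i, (i < length T)%nat -> i <> j -> nth i T 0 <= a1) -> a1 <= u -> a1 <= w ->
  nearest T u <> j -> nearest T w <> j -> nearest T u = nearest T w.
Proof.
  intros Hne HT Hu Hw Hnu Hnw.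
  destruct (nearest_spec T u Hne) as [Hu1 [Hu2 Hu3]].
  destruct (nearest_spec T w Hne) as [Hw1 [Hw2 Hw3]].
  set (nu := nearest T u) in *. set (nw := nearest T w) in *.
  assert (A1 := HT nu Hu1 Hnu). assert (A2 := HT nw Hw1 Hnw).
  assert (nth nw T 0 <= nth nu T 0) by (apply (dist_le _ _ u); try lra; apply Hu2; auto).
  assert (nth nu T 0 <= nth nw T 0) by (apply (dist_le _ _ w); try lra; apply Hw2; auto).
  destruct (Nat.lt_total nu nw) as [Hlt|[Heq|Hgt]]; auto.
  - specialize (Hw3 nu Hlt). assert (nth nu T 0 = nth nw T 0) by lra. rewrite H1 in Hw3. lra.
  - specialize (Hu3 nw Hgt). assert (nth nu T 0 = nth nw T 0) by lra. rewrite H1 in Hu3. lra.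
Qed.

Lemma three (T : list R) j a1 u v w : T <> [] ->
  (forall i, (i < length T)%nat -> i <> j -> nth i T 0 <= a1) -> a1 <= u -> a1 <= v -> a1 <= w ->
  nearest T u = nearest T v \/ nearest T u = nearest T w \/ nearest T v = nearest T w.
Proof.
  intros. destruct (Nat.eq_dec (nearest T u) j); destruct (Nat.eq_dec (nearest T v) j);
  destruct (Nat.eq_dec (nearest T w) j).
  all: try (left; congruence); try (right; left; congruence); try (right; right; congruence).
  all: try (left; eapply two_nonj; eauto; fail).
  all: try (right; left; eapply two_nonj; eauto; fail).
  all: try (right; right; eapply two_nonj; eauto; fail).
Qed.

Lemma sumR_zero (C : list R) : forall n,
  sumR (map (fun p => fst p * snd p) (combine (repeat 0 n) C)) = 0.
Proof.
  induction C; intros [|n]; simpl; auto. rewrite IHC. lra.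
Qed.

Lemma sumR_repeat0 n : sumR (repeat 0 n) = 0.
Proof. induction n; simpl; auto. rewrite IHn; lra. Qed.

Lemma in_hull_elem C x : In x C -> in_hull C x.
Proof.
  induction C as [|c C IH]; intros H; [inversion H|].
  destruct H as [E|H].
  - subst. exists (1 :: repeat 0 (length C)). simpl. repeat split.
    + rewrite repeat_length; auto.
    + constructor; [lra|]. apply Forall_forall. intros y Hy. apply repeat_spec in Hy. lra.
    + rewrite sumR_repeat0; lra.
    + rewrite sumR_zero. lra.
  - destruct (IH H) as [ws [H1 [H2 [H3 H4]]]].
    exists (0 :: ws). simpl. repeat split; auto.
    + constructor; auto; lra.
    + rewrite H3; lra.
    + rewrite H4; lra.
Qed.

Lemma list_min (l : list R) : l <> [] -> exists m, In m l /\ forall x, In x l -> m <= x.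
Proof.
  induction l as [|a l IH]; intros H; [congruence|].
  destruct l as [|b l].
  - exists a. split; simpl; auto. intros x [E|[]]; subst; lra.
  - destruct IH as [m [Hm Hmx]]; [congruence|].
    destruct (Rle_dec a m).
    + exists a. split; simpl; auto. intros x [E|Hx]; [subst; lra|]. specialize (Hmx x Hx); lra.
    + exists m. split; [simpl; auto|]. intros x [E|Hx]; [subst; lra|]. auto.
Qed.

Lemma list_max (l : list R) : l <> [] -> exists m, In m l /\ forall x, In x l -> x <= m.
Proof.
  induction l as [|a l IH]; intros H; [congruence|].
  destruct l as [|b l].
  - exists a. split; simpl; auto. intros x [E|[]]; subst; lra.
  - destruct IH as [m [Hm Hmx]]; [congruence|].
    destruct (Rle_dec m a).
    + exists a. split; simpl; auto. intros x [E|Hx]; [subst; lra|]. specialize (Hmx x Hx); lra.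
    + exists m. split; [simpl; auto|]. intros x [E|Hx]; [subst; lra|]. auto.
Qed.

Fixpoint insR (x : R) (l : list R) : list R :=
  match l with
  | [] => [x]
  | y :: l' => if Rle_dec x y then x :: y :: l' else y :: insR x l'
  end.

Fixpoint isort (l : list R) : list R :=
  match l with
  | [] => []
  | x :: l' => insR x (isort l')
  end.

Lemma insR_perm x l : Permutation (insR x l) (x :: l).
Proof.
  induction l as [|y l IH]; simpl; auto.
  destruct (Rle_dec x y); auto.
  eapply perm_trans; [apply perm_skip, IH|]. apply perm_swap.
Qed.

Lemma isort_perm l : Permutation (isort l) l.
Proof.
  induction l; simpl; auto.
  eapply perm_trans; [apply insR_perm|]. auto.
Qed.

Lemma insR_sorted x l : sortedR l -> sortedR (insR x l).
Proof.
  induction l as [|y l IH]; simpl; intros H.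
  - split; auto. intros _ [].
  - destruct H as [H1 H2]. destruct (Rle_dec x y).
    + simpl. split; [|split; auto]. intros z [E|Hz]; [subst; lra|]. specialize (H1 z Hz); lra.
    + simpl. split; auto. intros z Hz.
      apply (Permutation_in _ (insR_perm x l)) in Hz. destruct Hz as [E|Hz]; [subst; lra|auto].
Qed.

Lemma isort_sorted l : sortedR (isort l).
Proof. induction l; simpl; auto. apply insR_sorted; auto. Qed.

Lemma notsame Cs i j u w : is_clustering [] Cs \/ True ->
  (forall i j x, (i < length Cs)%nat -> (j < length Cs)%nat -> i <> j ->
     In x (nth i Cs []) -> ~ In x (nth j Cs [])) ->
  (i < length Cs)%nat -> (j < length Cs)%nat -> i <> j ->
  In u (nth i Cs []) -> In w (nth j Cs []) -> ~ same_cluster Cs u w.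
Proof.
  intros _ Hd Hi Hj Hij Hu Hw [D [HD [HuD HwD]]].
  destruct (In_nth Cs D [] HD) as [d [Hdl Hdn]]. subst D.
  destruct (Nat.eq_dec d i).
  - subst d. apply (Hd j i w Hj Hi (fun E => Hij (eq_sym E)) Hw HwD).
  - apply (Hd i d u Hi Hdl (fun E => n (eq_sym E)) Hu HuD).
Qed.

Theorem mainTheorem11 (k : nat) (X : list R) (Cs : list (list R)) (l : nat) :
  (3 <= k)%nat ->
  NoDup X ->
  is_k_clustering k X Cs ->
  convex_nice Cs ->
  (1 <= l)%nat ->
  (forall C, In C Cs -> (l <= length C)%nat) ->
  exists ord : list R, Permutation ord X /\
    ~ refines X (same_induced (seq_means l ord)) (same_cluster Cs).
Proof.
  intros Hk HnodupX [[HCs [Hdisj Hcover]] Hlen] Hnice Hl Hsize.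
  assert (Hlen3 : (3 <= length Cs)%nat) by lia.
  rewrite Forall_forall in HCs.
  assert (Hel : forall i, (i < length Cs)%nat -> exists y, In y (nth i Cs []) /\ In y X).
  { intros i Hi. assert (HIn := nth_In Cs [] Hi). destruct (HCs _ HIn) as [Hne _].
    destruct (nth i Cs []) as [|y ys] eqn:E; [congruence|]. exists y. split; simpl; auto.
    apply Hcover. exists (y :: ys). split; [exact HIn|simpl; auto]. }
  assert (HX : X <> []).
  { destruct (Hel 0%nat) as [y [_ Hy]]; [lia|]. destruct X; [inversion Hy|congruence]. }
  destruct (list_min X HX) as [a0 [Ha0X Ha0]].
  destruct (proj1 (Hcover a0) Ha0X) as [A [HACs Ha0A]].
  destruct (In_nth Cs A [] HACs) as [iA [HiA HnthA]].
  destruct (HCs A HACs) as [HAne HAnd].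
  destruct (list_max A HAne) as [a1 [Ha1A Ha1]].
  assert (HAX : forall a, In a A -> In a X) by (intros a Ha; apply Hcover; eauto).
  assert (Hout : forall p, In p X -> ~ In p A -> a1 < p).
  { intros p HpX HpA. destruct (proj1 (Hcover p) HpX) as [D [HD HpD]].
    destruct (In_nth Cs D [] HD) as [iD [HiD HnthD]].
    assert (iD <> iA) by (intro; subst; contradiction).
    assert (H0 := Hnice iA iD HiA HiD (fun E => H (eq_sym E)) a0 a1 p).
    rewrite HnthA, HnthD in H0.
    specialize (H0 (in_hull_elem _ _ Ha0A) (in_hull_elem _ _ Ha1A) (in_hull_elem _ _ HpD)).
    assert (a0 <= p) by (apply Ha0; auto). assert (a0 <= a1) by (apply Ha0; auto).
    destruct (Rle_lt_dec p a1); auto. exfalso. rabs. }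
  assert (HiBC : exists iB iC, (iB < length Cs)%nat /\ (iC < length Cs)%nat /\ iB <> iA /\ iC <> iA /\ iB <> iC).
  { destruct iA as [|[|iA']]; [exists 1%nat, 2%nat | exists 0%nat, 2%nat | exists 0%nat, 1%nat]; lia. }
  destruct HiBC as [iB [iC [HiB [HiC [HBA [HCA HBC]]]]]].
  destruct (Hel iB HiB) as [y [HyB HyX]].
  destruct (Hel iC HiC) as [z [HzC HzX]].
  assert (Hy : a1 < y).
  { apply Hout; auto. rewrite <- HnthA. apply (Hdisj iB iA); auto. }
  assert (Hz : a1 < z).
  { apply Hout; auto. rewrite <- HnthA. apply (Hdisj iC iA); auto. }
  set (filt := filter (fun x => if in_dec Req_dec_T x A then false else true) X).
  assert (Hfilt : forall x, In x filt <-> In x X /\ ~ In x A).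
  { intros x. unfold filt. rewrite filter_In. destruct (in_dec Req_dec_T x A); split; intros [H1 H2].
    - discriminate.
    - contradiction.
    - auto.
    - auto. }
  exists (A ++ isort filt). split.
  - eapply perm_trans; [apply Permutation_app_head, isort_perm|].
    apply NoDup_Permutation.
    + apply NoDup_app; auto. apply NoDup_filter; auto.
      intros a Ha Hf. apply Hfilt in Hf. tauto.
    + auto.
    + intros x. rewrite in_app_iff, Hfilt. split.
      * intros [H|[H _]]; auto.
      * intros H. destruct (in_dec Req_dec_T x A); auto.
  - intros Hr.
    assert (HlA : (l <= length A)%nat) by auto.
    set (st0 := map (fun x => (x, 1%nat)) (firstn l A)).
    assert (Hst0l : length st0 = l) by (unfold st0; rewrite length_map, firstn_length_le; auto).
    assert (Hfi : forall x, In x (firstn l A) -> In x A).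
    { intros x Hx. pose proof (firstn_skipn l A) as E. rewrite <- E. apply in_or_app; auto. }
    assert (Hsk : forall x, In x (skipn l A) -> In x A).
    { intros x Hx. pose proof (firstn_skipn l A) as E. rewrite <- E. apply in_or_app; auto. }
    assert (Hst0 : allle a1 st0).
    { intros i Hi. unfold st0. rewrite map_map. simpl. rewrite map_id.
      rewrite Hst0l in Hi. apply Ha1. apply Hfi.
      apply nth_In; rewrite firstn_length_le; auto. }
    assert (Hp1 : forall x, In x (skipn l A) -> x <= a1) by (intros x Hx; apply Ha1; auto).
    destruct (phase1 a1 (skipn l A) st0 ltac:(lia) Hp1 Hst0) as [P1l P1a].
    set (st1 := fold_left seq_step (skipn l A) st0) in *.
    destruct (phase2 a1 (isort filt) st1 a1) as [P2l [b' [_ P2]]].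
    + apply isort_sorted.
    + intros x Hx. apply (Permutation_in _ (isort_perm filt)), Hfilt in Hx.
      destruct Hx. left; apply Hout; auto.
    + lia.
    + split; [apply P1a|left; auto].
    + assert (HT : seq_means l (A ++ isort filt) = map fst (fold_left seq_step (isort filt) st1)).
      { unfold seq_means. rewrite firstn_app, skipn_app.
        replace (l - length A)%nat with 0%nat by lia. simpl. rewrite app_nil_r.
        rewrite fold_left_app. reflexivity. }
      set (T := seq_means l (A ++ isort filt)) in *.
      assert (HTl : length T = l) by (rewrite HT, length_map; lia).
      assert (HTne : T <> []) by (destruct T; simpl in HTl; [lia|congruence]).
      assert (Hj : exists j, forall i, (i < length T)%nat -> i <> j -> nth i T 0 <= a1).
      { rewrite HT, length_map. destruct P2 as [Ha | [j [_ Hj]]].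
        - exists 0%nat. intros; apply Ha; auto.
        - exists j. intros; apply Hj; auto. }
      destruct Hj as [j Hj].
      destruct (three T j a1 a1 y z HTne Hj) as [E|[E|E]]; try lra.
      * apply (notsame Cs iA iB a1 y (or_intror I) Hdisj); auto. rewrite HnthA; auto.
      * apply (notsame Cs iA iC a1 z (or_intror I) Hdisj); auto. rewrite HnthA; auto.
      * apply (notsame Cs iB iC y z (or_intror I) Hdisj); auto.
Qed.
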